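(* Let $G$ and $H$ be graphs, each with at least $2$ vertices. The lexicographic product $G[H]$ is $1$-perfectly orientable if and only if one of the following holds: (i) $G$ is edgeless and $H$ is $1$-perfectly orientable; (ii) $G$ is $1$-perfectly orientable and $H$ is complete; (iii) every connected component of $G$ is complete and $H$ is a co-bipartite $1$-perfectly orientable graph.
   Context: All graphs are finite and simple. An orientation of a graph $G$ is $1$-perfect if the out-neighborhood of every vertex induces a clique in $G$; $G$ is $1$-perfectly orientable if it admits a $1$-perfect orientation. The lexicographic product $G[H]$ has vertex set $V(G)\times V(H)$, with distinct $(u,v),(u',v')$ adjacent iff either $uu'\in E(G)$, or $u=u'$ and $vv'\in E(H)$. A graph is co-bipartite if its complement is bipartite. *)

(* Defs.v *)
From mathcomp Require Import all_boot.
Set Implicit Arguments. Unset Strict Implicit. Unset Printing Implicit Defensive.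

Definition simple_graph (T : finType) (e : rel T) : Prop :=
  symmetric e /\ irreflexive e.

Definition orientation (T : finType) (e : rel T) (o : rel T) : Prop :=
  (forall u v, o u v -> e u v) /\
  (forall u v, e u v -> (o u v || o v u)) /\
  (forall u v, o u v -> ~~ o v u).

Definition one_perfect (T : finType) (e : rel T) (o : rel T) : Prop :=
  orientation e o /\
  (forall u v w, o u v -> o u w -> v != w -> e v w).

Definition one_perfectly_orientable (T : finType) (e : rel T) : Prop :=
  exists o : rel T, one_perfect e o.

Definition lexprod (T1 T2 : finType) (e1 : rel T1) (e2 : rel T2)
  : rel (T1 * T2)%type :=
  fun x y => e1 x.1 y.1 || ((x.1 == y.1) && e2 x.2 y.2).

Definition edgeless (T : finType) (e : rel T) : Prop :=
  forall u v, ~~ e u v.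

Definition complete (T : finType) (e : rel T) : Prop :=
  forall u v, u != v -> e u v.

Definition components_complete (T : finType) (e : rel T) : Prop :=
  forall u v, connect e u v -> u != v -> e u v.

Definition bipartite (T : finType) (e : rel T) : Prop :=
  exists c : T -> bool, forall u v, e u v -> c u != c v.

Definition compl_rel (T : finType) (e : rel T) : rel T :=
  fun u v => (u != v) && ~~ e u v.

Definition cobipartite (T : finType) (e : rel T) : Prop :=
  bipartite (compl_rel e).

(* Main.v *)
Require Import Defs.
From mathcomp Require Import all_boot.
Set Implicit Arguments. Unset Strict Implicit. Unset Printing Implicit Defensive.

Lemma opo_inj (T T' : finType) (e : rel T) (e' : rel T') (f : T' -> T) :
  injective f -> (forall u v, e' u v = e (f u) (f v)) ->
  one_perfectly_orientable e -> one_perfectly_orientable e'.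
Proof.
move=> finj fe [o [[o1 [o2 o3]] o4]].
exists (fun u v => o (f u) (f v)); split; [split; [|split]|].
- by move=> u v /o1; rewrite fe.
- by move=> u v; rewrite fe => /o2.
- by move=> u v /o3.
- move=> u v w ouv ouw nvw; rewrite fe; apply: o4 ouv ouw _.
  by apply: contra nvw => /eqP /finj ->.
Qed.

Lemma no_K23 (T : finType) (e : rel T) (o : rel T) p1 p2 q1 q2 q3 :
  one_perfect e o ->
  e p1 q1 -> e p1 q2 -> e p1 q3 -> e p2 q1 -> e p2 q2 -> e p2 q3 ->
  ~~ e p1 p2 -> ~~ e q1 q2 -> ~~ e q1 q3 -> ~~ e q2 q3 ->
  p1 != p2 -> q1 != q2 -> q1 != q3 -> q2 != q3 -> False.
Proof.
move=> [[_ [cov _]] cl] e11 e12 e13 e21 e22 e23 n12 m12 m13 m23 d12 f12 f13 f23.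
case/orP: (cov _ _ e11) => h11; case/orP: (cov _ _ e12) => h12;
case/orP: (cov _ _ e13) => h13; case/orP: (cov _ _ e21) => h21;
case/orP: (cov _ _ e22) => h22; case/orP: (cov _ _ e23) => h23;
match goal with
| H1 : is_true (o ?u ?v), H2 : is_true (o ?u ?w), Hn : is_true (?v != ?w),
  Hne : is_true (~~ e ?v ?w) |- _ =>
   by move: (cl _ _ _ H1 H2 Hn); rewrite (negbTE Hne)
end.
Qed.

Lemma lex_P3 (T1 T2 : finType) (e1 : rel T1) (e2 : rel T2) o a b c x y :
  simple_graph e1 -> simple_graph e2 -> one_perfect (lexprod e1 e2) o ->
  e1 a b -> e1 b c -> a != c -> ~~ e1 a c -> x != y -> ~~ e2 x y -> False.
Proof.
move=> [s1 i1] [s2 i2] op eab ebc nac nEac nxy nExy.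
apply: (@no_K23 _ _ _ (b,x) (b,y) (a,x) (a,y) (c,x) op);
  rewrite /lexprod /= ?eqxx ?i1 ?i2 ?(s1 b a) ?eab ?ebc ?(negbTE nExy) ?(negbTE nEac) //=.
- by rewrite (negbTE nac).
- by rewrite (negbTE nac).
- by apply: contra nxy => /eqP[->].
- by apply: contra nxy => /eqP[->].
- by apply: contra nac => /eqP[->].
- by apply: contra nac => /eqP[->].
Qed.

Lemma comp_of_P3 (T : finType) (e : rel T) :
  (forall x y z, e x y -> e y z -> x != z -> e x z) -> components_complete e.
Proof.
move=> P3 u v /connectP [p pp ->] {v}.
elim: p u pp => [|x p IH] u /=; first by rewrite eqxx.
case/andP => ux pp nu.
case: (eqVneq x (last x p)) => [<- //|nx].
exact: P3 ux (IH x pp nx) nu.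
Qed.

Lemma rowstep (T1 T2 : finType) (e1 : rel T1) (e2 : rel T2) o a b u y v :
  simple_graph e1 -> one_perfect (lexprod e1 e2) o ->
  o (a,u) (b,y) -> compl_rel e2 y v -> ~~ o (a,u) (b,v).
Proof.
move=> [s1 i1] [_ cl] h /andP[nyv nE]; apply/negP => h'.
suff: (b,y) != (b,v) by move/(cl _ _ _ h h'); rewrite /lexprod /= i1 eqxx (negbTE nE).
by apply: contra nyv => /eqP[->].
Qed.

Lemma colstep (T1 T2 : finType) (e1 : rel T1) (e2 : rel T2) o a b u x v :
  simple_graph e1 -> simple_graph e2 -> one_perfect (lexprod e1 e2) o -> e1 a b ->
  ~~ o (a,x) (b,v) -> compl_rel e2 u x -> o (a,u) (b,v).
Proof.
move=> [s1 i1] [s2 i2] [[_ [cov _]] cl] eab h /andP[nux nE].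
have lab : forall p q, lexprod e1 e2 (a,p) (b,q) by move=> p q; rewrite /lexprod /= eab.
have hx : o (b,v) (a,x) by move: (cov _ _ (lab x v)); rewrite (negbTE h).
case: (boolP (o (a,u) (b,v))) => // hn; exfalso.
have hu : o (b,v) (a,u) by move: (cov _ _ (lab u v)); rewrite (negbTE hn).
suff: (a,x) != (a,u) by move/(cl _ _ _ hx hu); rewrite /lexprod /= i1 eqxx s2 (negbTE nE).
by rewrite eq_sym; apply: contra nux => /eqP[->].
Qed.

Lemma compl_sym (T : finType) (e : rel T) : symmetric e -> symmetric (compl_rel e).
Proof. by move=> s u v; rewrite /compl_rel eq_sym s. Qed.

Lemma parity (T1 T2 : finType) (e1 : rel T1) (e2 : rel T2) o a b :
  simple_graph e1 -> simple_graph e2 -> one_perfect (lexprod e1 e2) o -> e1 a b ->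
  forall n (p : seq T2) u, size p = n -> path (compl_rel e2) u p ->
  o (a,u) (b,u) -> o (a,u) (b, last u p) = ~~ odd n.
Proof.
move=> sg1 sg2 op eab.
elim/ltn_ind => n IH p u sp pp huu.
case: n IH sp => [|n] IH sp.
  by case: p sp pp.
case: (boolP (odd n)) => on.
- case: p sp pp => [//|x p'] /= [sp'] /andP[ux pp'].
  have hxx : o (a,x) (b,x).
    apply: (colstep sg1 sg2 op eab _ (etrans (compl_sym (proj1 sg2) x u) ux)).
    exact: rowstep sg1 op huu ux.
  have := IH n (ltnSn n) p' x sp' pp' hxx; rewrite on => /negbT h.
  rewrite /=; exact: colstep sg1 sg2 op eab h ux.
- case/lastP: p sp pp => [//|q z]; rewrite size_rcons => -[sq].
  rewrite rcons_path => /andP[pq qz].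
  have := IH n (ltnSn n) q u sq pq huu; rewrite (negbTE on) => h.
  rewrite last_rcons /= (negbTE on); apply/negbTE; exact: rowstep sg1 op h qz.
Qed.

Lemma cobip (T1 T2 : finType) (e1 : rel T1) (e2 : rel T2) o a b :
  simple_graph e1 -> simple_graph e2 -> one_perfect (lexprod e1 e2) o -> e1 a b ->
  cobipartite e2.
Proof.
move=> sg1 sg2 op eab.
have ces : connect_sym (compl_rel e2) by apply: sym_connect_sym; apply: compl_sym (proj1 sg2).
exists (fun v => let r := root (compl_rel e2) v in
   if o (a,r) (b,r) then o (a,r) (b,v) else o (b,r) (a,v)).
move=> u v uv /=.
have ruv : root (compl_rel e2) u = root (compl_rel e2) v.
  by apply/(rootP ces); apply: connect1.
have cr : connect (compl_rel e2) (root (compl_rel e2) v) u.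
  by rewrite ces -ruv connect_root.
rewrite ruv; move: (root (compl_rel e2) v) cr => r cr.
case/connectP: cr => p pp up.
have pv : path (compl_rel e2) r (rcons p v) by rewrite rcons_path pp -up uv.
have key : forall a' b', e1 a' b' -> o (a',r) (b',r) ->
    o (a',r) (b',u) != o (a',r) (b',v).
  move=> a' b' eab' hrr.
  rewrite up (parity sg1 sg2 op eab' erefl pp hrr).
  rewrite -[v](last_rcons r p) (parity sg1 sg2 op eab' erefl pv hrr) size_rcons /=.
  by case: odd.
case hrr: (o (a,r) (b,r)); first exact: key.
apply: key; first by rewrite (proj1 sg1).
have [[_ [cov _]] _] := op.
by move: (cov (a,r) (b,r)); rewrite /lexprod /= eab hrr => /(_ isT).
Qed.

Theorem theorem8 (T1 T2 : finType) (e1 : rel T1) (e2 : rel T2) :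
  simple_graph e1 -> simple_graph e2 ->
  1 < #|T1| -> 1 < #|T2| ->
  (one_perfectly_orientable (lexprod e1 e2) <->
   [\/ edgeless e1 /\ one_perfectly_orientable e2,
       one_perfectly_orientable e1 /\ complete e2
     | components_complete e1 /\ cobipartite e2 /\ one_perfectly_orientable e2]).
Proof.
move=> sg1 sg2 c1 c2; have [s1 i1] := sg1; have [s2 i2] := sg2; split.
- move=> [o op].
  case/card_gt1P: c1 => a0 [_ [_ _ _]].
  case/card_gt1P: c2 => x0 [_ [_ _ _]].
  have opoH : one_perfectly_orientable e2.
    apply: (@opo_inj _ _ (lexprod e1 e2) e2 (fun x => (a0,x))); last by exists o.
      by move=> x y [].
    by move=> u v; rewrite /lexprod /= i1 eqxx.
  have opoG : one_perfectly_orientable e1.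
    apply: (@opo_inj _ _ (lexprod e1 e2) e1 (fun a => (a,x0))); last by exists o.
      by move=> x y [].
    by move=> u v; rewrite /lexprod /= i2 andbF orbF.
  case: (boolP [exists u, [exists v, e1 u v]]) => [/existsP [a /existsP [b eab]] | nE]; last first.
    constructor 1; split=> // u v; apply/negP => h; apply: (negP nE).
    by apply/existsP; exists u; apply/existsP; exists v.
  case: (boolP [forall x, [forall y, (x != y) ==> e2 x y]]) => [/forallP Hc | /forallPn [x]].
    constructor 2; split=> // x y nxy.
    by move/forallP: (Hc x) => /(_ y) /implyP; apply.
  case/forallPn => y; rewrite negb_imply => /andP[nxy nExy].
  constructor 3; split; last split=> //.
    apply: comp_of_P3 => u v w euv evw nuw.
    case: (boolP (e1 u w)) => // nEuw; exfalso.
    exact: lex_P3 sg1 sg2 op euv evw nuw nEuw nxy nExy.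
  exact: cobip sg1 sg2 op eab.
- have rkinj : forall (T : finType) (x y : T), (enum_rank x : nat) = enum_rank y -> x = y.
    by move=> T x y /val_inj /enum_rank_inj.
  case=> [[eG [oH [[o1 [o2 o3]] cl]]] | [[oG [[o1 [o2 o3]] cl]] cH]
         | [cc [[c hc] [oH [[o1 [o2 o3]] cl]]]]].
  + exists (fun u v => (u.1 == v.1) && oH u.2 v.2); split; [split; [|split]|].
    * move=> [a x] [b y] /= /andP[/eqP <- h].
      by rewrite /lexprod /= eqxx (o1 _ _ h) orbT.
    * move=> [a x] [b y]; rewrite /lexprod /= (negbTE (eG a b)) /= => /andP[/eqP <- h].
      by rewrite eqxx /=; exact: o2 _ _ h.
    * move=> [a x] [b y] /= /andP[/eqP <- h]; rewrite eqxx /=; exact: o3 _ _ h.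
    * move=> [a x] [b y] [d z] /= /andP[/eqP<- h1] /andP[/eqP<- h2] ne.
      rewrite /lexprod /= eqxx (cl _ _ _ h1 h2) ?orbT //.
      by apply: contra ne => /eqP ->.
  + pose rk := fun x : T2 => (enum_rank x : nat).
    have oGaa : forall a, oG a a = false by move=> a; apply/negP => /o1; rewrite i1.
    exists (fun u v => oG u.1 v.1 || (u.1 == v.1) && (rk u.2 < rk v.2)).
    split; [split; [|split]|].
    * move=> [a x] [b y] /= /orP[h| /andP[/eqP<- h]].
        by rewrite /lexprod /= (o1 _ _ h).
      rewrite /lexprod /= eqxx cH ?orbT //.
      by apply: contraTneq h => ->; rewrite ltnn.
    * move=> [a x] [b y]; rewrite /lexprod /= => /orP[h | /andP[/eqP<- h]].
        by case/orP: (o2 _ _ h) => ->; rewrite ?orbT.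
      rewrite eqxx oGaa /=.
      case: ltngtP => // /rkinj exy.
      by rewrite exy i2 in h.
    * move=> [a x] [b y] /= /orP[h|/andP[/eqP<- h]].
        have nba : b != a by apply: contraTneq (o1 _ _ h) => ->; rewrite i1.
        by rewrite negb_or (o3 _ _ h) (negbTE nba).
      by rewrite oGaa eqxx /= -leqNgt ltnW.
    * move=> [a x] [b y] [d z] /= h1 h2 ne.
      case: (eqVneq b d) => [ebd | nbd].
        subst d; rewrite /lexprod /= eqxx cH ?orbT //.
        by apply: contra ne => /eqP ->.
      rewrite /lexprod /=.
      case/orP: h1 => [g1 | /andP[/eqP eab _]]; case/orP: h2 => [g2 | /andP[/eqP ead _]].
      - by rewrite (cl _ _ _ g1 g2 nbd).
      - by subst d; rewrite s1 (o1 _ _ g1).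
      - by subst b; rewrite (o1 _ _ g2).
      - by subst b d; rewrite eqxx in nbd.
  + pose rk := fun x : T1 => (enum_rank x : nat).
    exists (fun u v => (u.1 == v.1) && oH u.2 v.2
             || e1 u.1 v.1 && ((rk u.1 < rk v.1) == (c u.2 == c v.2))).
    split; [split; [|split]|].
    * move=> [a x] [b y] /= /orP[/andP[/eqP<- h] | /andP[h _]].
        by rewrite /lexprod /= eqxx (o1 _ _ h) orbT.
      by rewrite /lexprod /= h.
    * move=> [a x] [b y]; rewrite /lexprod /= => /orP [h | /andP[/eqP<- h]].
        rewrite h (s1 b a) h /= (eq_sym (c y)).
        case: ltngtP => [_|_|/rkinj eab]; try by case: (c x == c y); rewrite ?orbT.
        by rewrite eab i1 in h.
      rewrite eqxx i1 /=; by case/orP: (o2 _ _ h) => ->; rewrite ?orbT.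
    * move=> [a x] [b y] /= /orP[/andP[/eqP<- h]| /andP[h P]].
        by rewrite eqxx i1 /= orbF (o3 _ _ h).
      have nba : b != a by apply: contraTneq h => ->; rewrite i1.
      rewrite (negbTE nba) s1 h /= (eq_sym (c y)).
      move: P; case: ltngtP => [_|_|/rkinj eab]; try by case: (c x == c y).
      by rewrite eab i1 in h.
    * move=> [a x] [b y] [d z] /= h1 h2 ne; rewrite /lexprod /=.
      case/orP: h1 => [/andP[/eqP eab g1] | /andP[g1 P1]];
        case/orP: h2 => [/andP[/eqP ead g2]| /andP[g2 P2]].
      - subst b d; rewrite eqxx (cl _ _ _ g1 g2) ?orbT //.
        by apply: contra ne => /eqP ->.
      - by subst b; rewrite g2.
      - by subst d; rewrite s1 g1.
      - case: (eqVneq b d) => [ebd | nbd]; last first.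
          by rewrite cc // (connect_trans (connect1 (_ : e1 b a)) (connect1 g2)) // s1.
        subst d.
        have nyz : y != z by apply: contra ne => /eqP ->.
        have cyz : c y = c z.
          move/eqP: P1 => P1; move/eqP: P2; rewrite P1.
          by case: (c x); case: (c y); case: (c z).
        rewrite i1 /=; apply: contraT => nE.
        by move: (hc y z); rewrite /compl_rel nyz nE cyz eqxx; move/(_ isT).
Qed.
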